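(* Let $M$ be a countable transitive $\aleph_0$-categorical structure with no algebraicity admitting weak elimination of imaginaries. For all distinct $a,b\in M$ and every $2$-type $\tau$ of pairs of distinct elements, there is $k\in\mathbb N$ such that for every finite $A\subseteq M$ there is an alternating $\tau$-path of length $k$ from $a$ to $b$ whose interior is disjoint from $A$. In particular, there are infinitely many alternating $\tau$-paths of length $k$ between $a$ and $b$ with pairwise disjoint interiors.
   Context: $G=\operatorname{Aut}(M)$; a $2$-type is a $G$-orbit on $M^2$, $\mathrm{tp}(cd)$ being the orbit of $(c,d)$. An alternating $\tau$-path between $a$ and $b$ is a sequence of pairwise distinct elements $y_0,\dots,y_{2n}$ with $y_0=a$, $y_{2n}=b$ and $\mathrm{tp}(y_{2i}y_{2i+1})=\mathrm{tp}(y_{2i+2}y_{2i+1})=\tau$ for all $i<n$; its interior is $\{y_1,\dots,y_{2n-1}\}$. No algebraicity: for finite $A\subseteq M$ all orbits of the pointwise stabilizer $G_A$ on $M\setminus A$ are infinite. Weak elimination of imaginaries: every proper open subgroup $V<G$ contains some $G_{\bar a}$ ($\bar a$ a finite tuple) with finite index. *)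

(* Defs.v *)
From mathcomp Require Import all_boot.
Set Implicit Arguments. Unset Strict Implicit. Unset Printing Implicit Defensive.

Record Struct := {
  carrier :> countType;
  sym : Type;
  arity : sym -> nat;
  rel : forall s : sym, ('I_(arity s) -> carrier) -> Prop }.

(* list membership without an eqType *)
Fixpoint In_seq (T : Type) (x : T) (s : seq T) : Prop :=
  if s is y :: s' then y = x \/ In_seq x s' else False.

Section Defs.
Variable M : Struct.

Definition is_aut (g : M -> M) : Prop :=
  bijective g /\ forall (s : sym M) (t : 'I_(arity s) -> M), rel (g \o t) <-> rel t.

Definition pstab (A : seq M) (g : M -> M) : Prop :=
  is_aut g /\ forall x, x \in A -> g x = x.

(* tp(cd): the G-orbit of (c,d) on M^2 *)
Definition tp (c d : M) : M * M -> Prop :=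
  fun p => exists g, is_aut g /\ p = (g c, g d).

Definition is_2type_distinct (tau : M * M -> Prop) : Prop :=
  exists c d : M, c <> d /\ tau = tp c d.

(* aleph_0-categoricity, via Ryll-Nardzewski: Aut(M) is oligomorphic
   (finitely many orbits on M^n for every n). *)
Definition oligomorphic : Prop :=
  forall n, exists reps : seq ('I_n -> M), forall t : 'I_n -> M,
    exists2 r, In_seq r reps & exists g, is_aut g /\ forall i, t i = g (r i).

Definition transitive_aut : Prop := forall x y : M, exists g, is_aut g /\ g x = y.

(* no algebraicity: every orbit of G_A on M \ A is infinite *)
Definition no_algebraicity : Prop :=
  forall (A : seq M) (x : M), x \notin A ->
    forall s : seq M, exists g, pstab A g /\ g x \notin s.

(* subgroups of G, openness (pointwise convergence topology), properness *)
Definition is_subgroup (V : (M -> M) -> Prop) : Prop :=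
  [/\ forall g, V g -> is_aut g,
      V id,
      forall g h, V g -> V h -> V (g \o h)
    & forall g, V g -> exists h, [/\ V h, cancel g h & cancel h g] ].

Definition is_open (V : (M -> M) -> Prop) : Prop :=
  exists F : seq M, forall g, pstab F g -> V g.

Definition proper_in_G (V : (M -> M) -> Prop) : Prop :=
  exists g, is_aut g /\ ~ V g.

Definition finite_index (H V : (M -> M) -> Prop) : Prop :=
  exists s : seq (M -> M), (forall g, In_seq g s -> V g) /\
    forall v, V v -> exists2 g, In_seq g s & exists h, H h /\ v =1 g \o h.

Definition weak_EI : Prop :=
  forall V, is_subgroup V -> is_open V -> proper_in_G V ->
    exists a : seq M, (forall g, pstab a g -> V g) /\ finite_index (pstab a) V.

(* alternating tau-path y_0,...,y_{2n} from a to b; its length is n *)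
Definition alt_path (tau : M * M -> Prop) (a b : M) (n : nat) (y : seq M) : Prop :=
  [/\ size y = (2 * n).+1, nth a y 0 = a, nth a y (2 * n) = b, uniq y
    & forall i, i < n ->
        tp (nth a y (2 * i)) (nth a y (2 * i).+1) = tau /\
        tp (nth a y (2 * i).+2) (nth a y (2 * i).+1) = tau].

Definition interior (n : nat) (y : seq M) : seq M := drop 1 (take (2 * n) y).

End Defs.

(* Main.v *)
Require Import Defs.
From mathcomp Require Import all_boot zify.
From Stdlib Require Import FunctionalExtensionality PropExtensionality Classical ClassicalEpsilon.
Set Implicit Arguments. Unset Strict Implicit. Unset Printing Implicit Defensive.

Lemma aut_id (M : Struct) : is_aut (@id M).
Proof. split; first by exists id. by move=> s t. Qed.

Lemma aut_comp (M : Struct) (g h : M -> M) : is_aut g -> is_aut h -> is_aut (g \o h).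
Proof.
move=> Hg Hh; split; first exact: bij_comp Hg.1 Hh.1.
move=> s t; exact: (iff_trans (proj2 Hg s (h \o t)) (proj2 Hh s t)).
Qed.

Lemma aut_inv (M : Struct) (g : M -> M) : is_aut g ->
  exists h, [/\ is_aut h, cancel g h & cancel h g].
Proof.
case=> [[h gh hg] Hr]; exists h; split => //; split; first by exists g.
move=> s t; have e : g \o (h \o t) = t by apply: functional_extensionality => i /=; rewrite hg.
split => H.
- by move: (proj2 (Hr s (h \o t)) H); rewrite e.
- by apply: (proj1 (Hr s _)); rewrite e.
Qed.

Lemma tp_aut (M : Struct) (g : M -> M) x y : is_aut g -> tp (g x) (g y) = tp x y.
Proof.
move=> Hg; apply: functional_extensionality => p; apply: propositional_extensionality; split.
- case=> f [Hf ->]; exists (f \o g); split => //; exact: aut_comp.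
- case=> f [Hf ->]; case: (aut_inv Hg) => h [Hh gh hg].
  exists (f \o h); split; first exact: aut_comp.
  by rewrite /= !gh.
Qed.

Lemma tp_neq (M : Struct) (tau : M * M -> Prop) x y :
  is_2type_distinct tau -> tp x y = tau -> x <> y.
Proof.
case=> c [d [cd ->]] e xy; subst y.
have : tp x x (x, x) by exists id; split => //; exact: aut_id.
rewrite e; case=> g [Hg [e1 e2]]; apply: cd; apply: (bij_inj Hg.1); congruence.
Qed.

Definition alt' (M : Struct) (tau : M * M -> Prop) (d a b : M) (n : nat) (y : seq M) : Prop :=
  [/\ size y = (2 * n).+1, nth d y 0 = a, nth d y (2 * n) = b, uniq y
    & forall i, i < n ->
        tp (nth d y (2 * i)) (nth d y (2 * i).+1) = tau /\
        tp (nth d y (2 * i).+2) (nth d y (2 * i).+1) = tau].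

Lemma alt_pathE (M : Struct) (tau : M * M -> Prop) (d a b : M) n y :
  alt_path tau a b n y <-> alt' tau d a b n y.
Proof.
have H (d1 d2 : M) : alt' tau d1 a b n y -> alt' tau d2 a b n y.
  case=> Sy h0 h2 uy hi; have E j : j <= 2 * n -> nth d1 y j = nth d2 y j.
    by move=> hj; apply: set_nth_default; rewrite Sy.
  split => //; first by rewrite -E.
  - by rewrite -E.
  - move=> i lti; rewrite -!E; [exact: hi | lia ..].
by split; apply: H.
Qed.

Lemma mem_interior (M : Struct) n (p : seq M) d : size p = (2*n).+1 -> uniq p ->
  forall z, (z \in interior n p) = [&& z \in p, z != nth d p 0 & z != nth d p (2*n)].
Proof.
case: p => [//|p0 t] /= [St] /andP [p0t ut] z.
case: n St => [|m] St.
  by case: t St p0t ut => // _ _ _; rewrite /interior /= in_cons in_nil; case: eqP.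
rewrite /interior.
have -> : 2 * m.+1 = (2 * m).+1.+1 by lia.
rewrite [take _ _]/= /= drop0.
have Hl : (2 * m).+1 < size t by rewrite St; lia.
have Et : t = take (2*m).+1 t ++ [:: nth d t (2*m).+1].
  by rewrite -{1}(cat_take_drop (2*m).+1 t) (drop_nth d Hl) drop_oversize // St; lia.
move: ut p0t; rewrite [in uniq t]Et [in p0 \in t]Et.
rewrite in_cons [in z \in t]Et.
rewrite cat_uniq !mem_cat /= !in_cons in_nil !orbF andbT.
move=> /andP [_ hl'].
rewrite negb_or => /andP [hp0 _].
case: (boolP (z \in take (2*m).+1 t)) => hz /=.
  rewrite orbT /=; apply/esym/andP; split; apply/eqP => e; subst z.
  - by rewrite hz in hp0.
  - by rewrite hz in hl'.
by case: eqP => //= _; case: eqP.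
Qed.

Lemma alt_rev (M : Struct) (tau : M * M -> Prop) a b n p :
  alt_path tau a b n p -> alt_path tau b a n (rev p).
Proof.
move=> /(@alt_pathE _ _ a _ _ _ _) [Sp h0 h2 up hi]; apply/(@alt_pathE _ _ a _ _ _ _).
have Nr j : j <= 2*n -> nth a (rev p) j = nth a p (2*n - j).
  move=> hj; rewrite nth_rev ?Sp; [congr nth; lia | lia].
split.
- by rewrite size_rev.
- by rewrite Nr // subn0.
- by rewrite Nr // subnn.
- by rewrite rev_uniq.
- move=> i lti; rewrite !Nr; try lia.
  have [h1 h2'] := hi (n - i.+1) ltac:(lia).
  have -> : 2*n - 2*i = (2*(n-i.+1)).+2 by lia.
  have -> : 2*n - (2*i).+1 = (2*(n-i.+1)).+1 by lia.
  have -> : 2*n - (2*i).+2 = (2*(n-i.+1)) by lia.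
  by split.
Qed.

Lemma alt_map (M : Struct) (tau : M * M -> Prop) (g : M -> M) a b n p :
  is_aut g -> alt_path tau a b n p -> alt_path tau (g a) (g b) n (map g p).
Proof.
move=> Hg /(@alt_pathE _ _ a _ _ _ _) [Sp h0 h2 up hi]; apply/(@alt_pathE _ _ (g a) _ _ _ _).
have Nm j : j <= 2*n -> nth (g a) (map g p) j = g (nth a p j).
  by move=> hj; apply: nth_map; rewrite Sp; lia.
split.
- by rewrite size_map.
- by rewrite Nm // h0.
- by rewrite Nm // h2.
- by rewrite (map_inj_uniq (bij_inj Hg.1)).
- by move=> i lti; rewrite !Nm ?tp_aut //; try lia; apply: hi.
Qed.

Lemma alt_cat (M : Struct) (tau : M * M -> Prop) a b c k l p1 p2 :
  alt_path tau a c k p1 -> alt_path tau c b l p2 ->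
  (forall z, z \in p1 -> z \in behead p2 -> False) ->
  alt_path tau a b (k + l) (p1 ++ behead p2).
Proof.
move=> /(@alt_pathE _ _ a _ _ _ _) [S1 a1 c1 u1 h1] /(@alt_pathE _ _ a _ _ _ _) [S2 c2 b2 u2 h2] dj.
apply/(@alt_pathE _ _ a _ _ _ _).
have N1 j : j <= 2*k -> nth a (p1 ++ behead p2) j = nth a p1 j.
  by move=> hj; rewrite nth_cat S1 ifT //; lia.
have N2 j : 2*k <= j -> nth a (p1 ++ behead p2) j = nth a p2 (j - 2*k).
  move=> hj; case: (ltnP (2*k) j) => hj'.
    rewrite nth_cat S1 ifF; last by apply/negbTE; rewrite -leqNgt.
    rewrite nth_behead; congr nth; lia.
  have -> : j = 2 * k by lia.
  by rewrite N1 // c1 subnn c2.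
split.
- rewrite size_cat size_behead S1 S2 /=; lia.
- by rewrite N1 // a1.
- rewrite N2; last lia.
  by rewrite mulnDr addKn.
- rewrite cat_uniq u1 /=; apply/andP; split.
    apply/hasPn => z hz; apply/negP => hz'; exact: (dj z hz' hz).
  by clear -u2; case: p2 u2 => //= x s /andP [].
- move=> i lti; case: (ltnP i k) => hik.
    by rewrite !N1; try lia; apply: h1.
  rewrite !N2; try lia.
  have -> : 2*i - 2*k = 2*(i-k) by lia.
  have -> : (2*i).+1 - 2*k = (2*(i-k)).+1 by lia.
  have -> : (2*i).+2 - 2*k = (2*(i-k)).+2 by lia.
  apply: h2; lia.
Qed.

Definition R (M : Struct) (tau : M * M -> Prop) k (x y : M) : Prop :=
  forall A : seq M, exists p, alt_path tau x y k p /\ forall z, z \in interior k p -> z \notin A.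

Lemma interior_sub (M : Struct) (tau : M * M -> Prop) a b n p z :
  alt_path tau a b n p -> (z \in interior n p) = [&& z \in p, z != a & z != b].
Proof.
by case/(@alt_pathE _ _ a _ _ _ _) => Sp h0 h2 up _; rewrite (mem_interior a Sp up) h0 h2.
Qed.

Lemma alt_head (M : Struct) (tau : M * M -> Prop) a b n p :
  alt_path tau a b n p -> exists t, p = a :: t /\ a \notin t.
Proof.
case/(@alt_pathE _ _ a _ _ _ _) => Sp h0 _ up _.
by case: p Sp h0 up => //= u t _ -> /andP [ht _]; exists t.
Qed.

Lemma alt_mem (M : Struct) (tau : M * M -> Prop) a b n p :
  alt_path tau a b n p -> (a \in p) /\ (b \in p).
Proof.
case/(@alt_pathE _ _ a _ _ _ _) => Sp h0 h2 _ _; split.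
- by rewrite -h0 mem_nth // Sp.
- by rewrite -h2 mem_nth // Sp.
Qed.

Lemma R_sym (M : Struct) (tau : M * M -> Prop) k x y : R tau k x y -> R tau k y x.
Proof.
move=> H A; case: (H A) => p [hp hi]; exists (rev p); split; first exact: alt_rev.
move=> z; rewrite (interior_sub _ (alt_rev hp)) mem_rev => /and3P [h1 h2 h3].
by apply: hi; rewrite (interior_sub _ hp) h1 h2 h3.
Qed.

Lemma R_aut (M : Struct) (tau : M * M -> Prop) (g : M -> M) k x y :
  is_aut g -> R tau k x y -> R tau k (g x) (g y).
Proof.
move=> Hg H A; case: (aut_inv Hg) => h [Hh gh hg].
case: (H (map h A)) => p [hp hi]; exists (map g p); split; first exact: alt_map.
move=> z; rewrite (interior_sub _ (alt_map Hg hp)) => /and3P [].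
case/mapP => w hw -> h2 h3.
have : w \notin map h A.
  apply: hi; rewrite (interior_sub _ hp) hw /=; apply/andP; split.
  - by apply: contra h2 => /eqP ->.
  - by apply: contra h3 => /eqP ->.
by apply: contra => hA; apply/mapP; exists (g w); rewrite ?gh.
Qed.

Lemma R_trans (M : Struct) (tau : M * M -> Prop) k l (x y c : M) :
  no_algebraicity M -> x <> y -> x <> c -> c <> y ->
  R tau k x c -> R tau l c y -> R tau (k + l) x y.
Proof.
move=> Hna xy xc cy H1 H2 A.
have cn : c \notin [:: x; y] by rewrite !in_cons in_nil orbF; apply/norP; split; apply/eqP; auto.
case: (Hna _ _ cn A) => g [[Hg gf] gcA].
have gx : g x = x by apply: gf; rewrite !in_cons eqxx.
have gy : g y = y by apply: gf; rewrite !in_cons eqxx orbT.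
have H1' := R_aut Hg H1; have H2' := R_aut Hg H2; rewrite gx in H1'; rewrite gy in H2'.
set c' := g c in H1' H2' gcA.
have xc' : x != c' by apply/eqP => e; apply: xc; apply: (bij_inj Hg.1); rewrite gx.
have c'y : c' != y by apply/eqP => e; apply: cy; apply: (bij_inj Hg.1); rewrite gy.
case: (H2' (x :: A)) => p2 [hp2 hi2].
case: (H1' (A ++ p2)) => p1 [hp1 hi1].
case: (alt_head hp2) => t [ep2 c't].
have [x1 _] := alt_mem hp1.
have [_ y2] := alt_mem hp2.
have hcat : alt_path tau x y (k + l) (p1 ++ behead p2).
  apply: (alt_cat hp1 hp2); rewrite ep2 /= => z z1 zt.
  have z2 : z \in p2 by rewrite ep2 in_cons zt orbT.
  case: (eqVneq z c') => [ezc | zc]; first by subst z; rewrite zt in c't.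
  case: (eqVneq z x) => [ezx | zx].
    subst z; move: (hi2 x); rewrite (interior_sub _ hp2) z2 zc.
    have xy' : x != y by apply/eqP.
    by rewrite xy' in_cons eqxx; move/(_ isT).
  move: (hi1 z); rewrite (interior_sub _ hp1) z1 zx zc mem_cat z2 orbT.
  by move/(_ isT).
exists (p1 ++ behead p2); split => // z.
rewrite (interior_sub _ hcat) mem_cat => /and3P [zin zx zy].
case: (eqVneq z c') => [-> // | zc].
move: zin; rewrite ep2 /= => /orP [] zin.
  have := hi1 z; rewrite (interior_sub _ hp1) zin zx zc mem_cat.
  by move/(_ isT); rewrite negb_or => /andP [].
have := hi2 z; rewrite (interior_sub _ hp2) ep2 in_cons zin orbT zc zy /=.
by move/(_ isT); rewrite in_cons negb_or => /andP [].
Qed.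

Definition E (M : Struct) (tau : M * M -> Prop) (x y : M) : Prop :=
  x = y \/ exists k, R tau k x y.

Lemma E_sym (M : Struct) (tau : M * M -> Prop) x y : E tau x y -> E tau y x.
Proof. by case=> [-> | [k H]]; [left | right; exists k; apply: R_sym]. Qed.

Lemma E_aut (M : Struct) (tau : M * M -> Prop) (g : M -> M) x y :
  is_aut g -> E tau x y -> E tau (g x) (g y).
Proof. by move=> Hg [-> | [k H]]; [left | right; exists k; apply: R_aut]. Qed.

Lemma E_trans (M : Struct) (tau : M * M -> Prop) x y z :
  no_algebraicity M -> E tau x y -> E tau y z -> E tau x z.
Proof.
move=> Hna [-> // | [k H1]] [<- | [l H2]]; first by right; exists k.
case: (classic (x = z)) => [-> | xz]; first by left.
case: (classic (x = y)) => [exy | xy]; first by subst y; right; exists l.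
case: (classic (y = z)) => [eyz | yz]; first by subst z; right; exists k.
by right; exists (k + l); apply: (R_trans Hna xz xy yz).
Qed.

Lemma R1 (M : Struct) (tau : M * M -> Prop) x y c :
  no_algebraicity M -> is_2type_distinct tau -> x <> y ->
  tp x c = tau -> tp y c = tau -> R tau 1 x y.
Proof.
move=> Hna Ht xy hx hy A.
have xc := tp_neq Ht hx; have yc := tp_neq Ht hy.
have cn : c \notin [:: x; y].
  by rewrite !in_cons in_nil orbF; apply/norP; split; apply/eqP; auto.
case: (Hna _ _ cn A) => g [[Hg gf] gcA].
have gx : g x = x by apply: gf; rewrite !in_cons eqxx.
have gy : g y = y by apply: gf; rewrite !in_cons eqxx orbT.
have gcx : g c <> x by move=> e; apply: xc; apply: (bij_inj Hg.1); rewrite gx.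
have gcy : g c <> y by move=> e; apply: yc; apply: (bij_inj Hg.1); rewrite gy.
exists [:: x; g c; y]; split.
  split => //.
  - rewrite /= !in_cons in_nil !orbF; apply/andP; split.
      by apply/norP; split; apply/eqP => e; [apply: gcx | apply: xy].
    by rewrite andbT; apply/eqP.
  - move=> i; rewrite ltnS leqn0 => /eqP -> /=.
    by split; [rewrite -{1}gx | rewrite -{1}gy]; rewrite tp_aut.
by move=> z; rewrite /interior /= in_cons in_nil orbF => /eqP ->.
Qed.

Lemma In_seq_map (M : Struct) (d : M) (f : M -> M) (s : seq (M -> M)) :
  In_seq f s -> f d \in map (fun f => f d) s.
Proof.
elim: s => //= u s IH [-> | H]; first by rewrite in_cons eqxx.
by rewrite in_cons IH ?orbT.
Qed.

Lemma E_univ (M : Struct) (tau : M * M -> Prop) :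
  transitive_aut M -> no_algebraicity M -> weak_EI M -> is_2type_distinct tau ->
  forall a b : M, E tau a b.
Proof.
move=> Htr Hna Hwei Ht a b; apply: NNPP => nab.
have [c hc] : exists c, tp a c = tau.
  case: (Ht) => c0 [d0 [_ ->]]; case: (Htr c0 a) => g [Hg <-].
  by exists (g d0); rewrite tp_aut.
pose V := fun g : M -> M => is_aut g /\ forall y, E tau a y <-> E tau a (g y).
have Vsub : is_subgroup V.
  split.
  - by move=> g [].
  - by split; [exact: aut_id | ].
  - move=> g h [Hg eg] [Hh eh]; split; first exact: aut_comp.
    by move=> y; apply: (iff_trans (eh y)); apply: eg.
  - move=> g [Hg eg]; case: (aut_inv Hg) => h [Hh gh hg].
    exists h; split => //; split => // y.
    by have := eg (h y); rewrite hg => e; split; apply e.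
have Vopen : is_open V.
  exists [:: a] => g [Hg gf]; have ga : g a = a by apply: gf; rewrite in_cons eqxx.
  split => // y; split => H.
    by rewrite -{1}ga; apply: E_aut.
  case: (aut_inv Hg) => h [Hh gh hg].
  have := E_aut Hh H; rewrite gh.
  by have -> : h a = a by rewrite -{1}ga gh.
have Vprop : proper_in_G V.
  case: (Htr a b) => g [Hg gab]; exists g; split => // -[_ eg].
  by apply: nab; rewrite -gab; apply: (proj1 (eg a)); left.
case: (Hwei V Vsub Vopen Vprop) => abar [Hsub [s [Hs Hfi]]].
have [x [Eax xn]] : exists x, E tau a x /\ x \notin abar.
  have ac := tp_neq Ht hc.
  have an : a \notin [:: c] by rewrite in_cons in_nil orbF; apply/eqP.
  case: (Hna _ _ an abar) => g [[Hg gf] gan].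
  have gc : g c = c by apply: gf; rewrite in_cons eqxx.
  exists (g a); split => //.
  case: (classic (a = g a)) => [e | ne]; first by left.
  right; exists 1; apply: (R1 Hna Ht ne hc).
  by rewrite -{1}gc tp_aut.
case: abar Hsub Hfi xn => [|d ab] Hsub Hfi xn.
  case: Vprop => g [Hg nV]; apply: nV; apply: Hsub; split => //.
have dx : d \notin [:: x].
  rewrite in_cons in_nil orbF; apply/eqP => e; subst d.
  by move: xn; rewrite in_cons eqxx.
case: (Hna _ _ dx (map (fun f => f d) s)) => g [[Hg gf] gdn].
have gx : g x = x by apply: gf; rewrite in_cons eqxx.
have Vg : V g.
  split => // y; split => H.
    have Exy : E tau x y by apply: (E_trans Hna (E_sym Eax)).
    by apply: (E_trans Hna Eax); rewrite -gx; apply: E_aut.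
  case: (aut_inv Hg) => h [Hh gh hg].
  have hx : h x = x by rewrite -{1}gx gh.
  have Exgy : E tau x (g y) by apply: (E_trans Hna (E_sym Eax)).
  have := E_aut Hh Exgy; rewrite hx gh => Exy.
  exact: (E_trans Hna Eax).
case: (Hfi g Vg) => f fs [h [[_ hf] eg]].
move: gdn; rewrite eg /= hf ?in_cons ?eqxx //.
by rewrite (In_seq_map d fs).
Qed.

Theorem mainTheorem12 (M : Struct) :
  oligomorphic M -> transitive_aut M -> no_algebraicity M -> weak_EI M ->
  forall a b : M, a <> b ->
  forall tau : M * M -> Prop, is_2type_distinct tau ->
  exists k : nat,
    (forall A : seq M, exists y : seq M,
       alt_path tau a b k y /\ forall x, x \in interior k y -> x \notin A) /\
    (exists P : nat -> seq M,
       (forall i, alt_path tau a b k (P i)) /\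
       forall i j, i <> j -> forall x, x \in interior k (P i) -> x \notin interior k (P j)).
Proof.
move=> _ Htr Hna Hwei a b ab tau Ht.
case: (E_univ Htr Hna Hwei Ht a b) => [//|[k Hk]]; exists k; split => //.
pose pick A := proj1_sig (constructive_indefinite_description _ (Hk A)).
have pickP A : alt_path tau a b k (pick A) /\ forall z, z \in interior k (pick A) -> z \notin A.
  exact: (proj2_sig (constructive_indefinite_description _ (Hk A))).
pose L := fix L n := if n is n'.+1 then pick (flatten (map (interior k) (L n'))) :: L n' else [::].
pose P i := pick (flatten (map (interior k) (L i))).
have PL i j : i < j -> P i \in L j.
  elim: j => // j IH; rewrite ltnS leq_eqVlt => /orP [/eqP -> | lt].
    by rewrite /= in_cons eqxx.
  by rewrite /= in_cons IH ?orbT.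
have key i j : i < j -> forall x, x \in interior k (P i) -> x \notin interior k (P j).
  move=> lt x hx; apply/negP => hy.
  have : x \in flatten (map (interior k) (L j)) by apply/flatten_mapP; exists (P i) => //; apply: PL.
  by apply/negP; apply: (proj2 (pickP _)).
exists P; split; first by move=> i; exact: (proj1 (pickP _)).
move=> i j ij x hx; case: (ltngtP i j) => [lt | lt | e].
- exact: (key i j lt x hx).
- by apply/negP => hy; move: (key _ _ lt x hy); rewrite hx.
- by exfalso; apply: ij; apply/eqP; rewrite e.
Qed.
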